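(* Let $p=(p_i)_{i\in\mathbb{N}}\in[0,1]^{\mathbb{N}}$ be a cookie environment, and let $\overline{p}_n=\frac1n\sum_{i=1}^n p_i$. Suppose that the limit $\overline{p}=\lim_{n\to\infty}\overline{p}_n$ exists and lies in $(0,1)$, and that there is $K\in\mathbb{R}$ with $|\overline{p}_n-\overline{p}|\le\frac Kn$ for all $n\in\mathbb{N}$. Let $\mu=\frac{\overline{p}}{1-\overline{p}}$. Then there is a constant $c>0$ depending only on $p$ such that for all positive integers $x$ and all $\varepsilon>0$, \[ \Pr\Big[\Big|\frac{U_p(x)}{x}-\mu\Big|>\varepsilon\Big]\le 2\exp\Big(-\frac{c\varepsilon^2}{1+\mu+\varepsilon}x\Big). \]
   Context: For a cookie environment $p$, let $B_1,B_2,\dots$ be independent Bernoulli random variables with $\Pr[B_i=1]=p_i$ ($B_i=1$ is a ''success'', $B_i=0$ a ''failure''). For a positive integer $x$, $U_p(x)=\inf\{k\in\mathbb{N}:\sum_{i=1}^k(1-B_i)=x\}-x$, i.e. the number of successes before the $x$-th failure. *)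

(* Defs.v *)
From HB Require Import structures.
From mathcomp Require Import all_boot all_order all_algebra.
From mathcomp Require Import all_classical all_reals all_analysis.
Set Implicit Arguments. Unset Strict Implicit. Unset Printing Implicit Defensive.
Import Order.TTheory GRing.Theory Num.Theory.
Import numFieldNormedType.Exports.
Local Open Scope classical_set_scope.
Local Open Scope ring_scope.

(* Convention: indices are 0-based: the paper's p_i / B_i (i >= 1) are
   p (i-1) / B (i-1) here. *)

Section Cookie.
Context {R : realType}.

Definition pavg (p : nat -> R) (n : nat) : R :=
  (\sum_(i < n) p i) / n%:R.

Context {d : measure_display} {T : measurableType d}.

Definition nfail (B : nat -> T -> bool) (k : nat) (w : T) : nat :=
  \sum_(i < k) (~~ B i w : nat).

Definition Ucookie (B : nat -> T -> bool) (x : nat) (w : T) : \bar R :=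
  match pselect (exists k, nfail B k w == x) with
  | left h => (((ex_minn h) - x)%N%:R)%:E
  | right _ => +oo%E
  end.

Definition bool_rvs (B : nat -> T -> bool) : Prop :=
  forall i (b : bool), measurable [set w | B i w = b].

Definition mutually_independent (P : probability T R) (B : nat -> T -> bool) : Prop :=
  forall (I : seq nat) (b : nat -> bool), uniq I ->
    P [set w | forall i, i \in I -> B i w = b i] =
    (\prod_(i <- I) fine (P [set w | B i w = b i]))%:E.

End Cookie.

(* Main.v *)
Require Import Defs.
From HB Require Import structures.
From mathcomp Require Import all_boot all_order all_algebra.
From mathcomp Require Import all_classical all_reals all_analysis.
From mathcomp Require Import ring lra.
Import Order.TTheory GRing.Theory Num.Theory.
Import numFieldNormedType.Exports.
Local Open Scope classical_set_scope.
Local Open Scope ring_scope.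
From mathcomp Require Import zify.

Section Real.
Variable R : realType.

Lemma expRN_quad (l : R) : 0 <= l -> expR (- l) <= 1 - l + l ^+ 2.
Proof.
move=> hl.
have -> : - l = - (l / 2) + - (l / 2) by field.
rewrite expRD expRN.
set y := expR (l / 2).
have hy : 1 + l / 2 <= y by apply: expR_ge1Dx.
have y0 : 0 < y by apply: expR_gt0.
rewrite -invfM -div1r ler_pdivrMr; last by apply: mulr_gt0.
have h1 : 0 <= 1 + l / 2 by lra.
have h2 : 0 < 1 - l + l ^+ 2 by nra.
have h3 : (1 + l/2) * (1 + l/2) <= y * y by apply: ler_pM.
have h4 : 1 <= (1 - l + l ^+ 2) * ((1 + l/2) * (1 + l/2)) by nra.
apply: (le_trans h4). rewrite (_ : 1 + (- (l / 2) - l / 2) + l ^+ 2 = 1 - l + l ^+ 2); last by field. by rewrite ler_pM2l.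
Qed.

Section Chern.
Variables (n : nat) (rho : 'I_n -> bool -> R) (s : bool).
Hypothesis rho_ge0 : forall i v, 0 <= rho i v.
Hypothesis rho_sum : forall i, rho i true + rho i false = 1.

Definition cnt (b : {ffun 'I_n -> bool}) : nat := (\sum_i (b i == s))%N.

Lemma rho_le1 i v : rho i v <= 1.
Proof. have := rho_sum i; have := rho_ge0 i true; have := rho_ge0 i false. case: v; lra. Qed.

Lemma chern1 (l a : R) : 0 <= l ->
  \sum_(b | (cnt b)%:R <= a) \prod_i rho i (b i) <=
  expR (l * a) * \prod_i (1 - rho i s * (1 - expR (- l))).
Proof.
move=> hl.
apply: (@le_trans _ _ (\sum_(b : {ffun 'I_n -> bool}) (\prod_i rho i (b i)) * expR (l * (a - (cnt b)%:R)))).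

  rewrite [leLHS]big_mkcond /=; apply: ler_sum => b _.
  have hp : 0 <= \prod_i rho i (b i) by apply: prodr_ge0 => i _.
  case: ifP => h.
    apply: ler_peMr => //.
    have : 1 + l * (a - (cnt b)%:R) <= expR (l * (a - (cnt b)%:R)) by apply: expR_ge1Dx.
    have : 0 <= l * (a - (cnt b)%:R) by apply: mulr_ge0 => //; lra.
    lra.
  by apply: mulr_ge0 => //; apply: expR_ge0.
have E : forall b : {ffun 'I_n -> bool},
   expR (l * (a - (cnt b)%:R)) = expR (l * a) * \prod_i expR (- l * (b i == s)%:R).
  move=> b; rewrite -expR_sum -expRD; congr expR.
  rewrite /cnt natr_sum -mulr_sumr; ring.
rewrite (eq_bigr (fun b : {ffun 'I_n -> bool} => expR (l * a) * \prod_i (rho i (b i) * expR (- l * (b i == s)%:R)))); last first.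
  move=> b _. rewrite E mulrCA -big_split /=. done.
rewrite -mulr_sumr; apply: ler_wpM2l; first exact: expR_ge0.
rewrite -(bigA_distr_bigA (fun i (v : bool) => rho i v * expR (- l * (v == s)%:R))) /=.
apply: ler_prod => i _; rewrite big_bool /=.
have := rho_sum i; have := rho_ge0 i true; have := rho_ge0 i false.
have := expR_gt0 (- l); case: s => /=; rewrite ?mulr1 ?mulr0 ?expR0 ?mulr1 => *; apply/andP; split; nra.
Qed.

Lemma chern2 (l a : R) : 0 <= l ->
  \sum_(b | (cnt b)%:R <= a) \prod_i rho i (b i) <=
  expR (l * a - (l - l ^+ 2) * \sum_i rho i s).
Proof.
move=> hl; apply: (le_trans (chern1 _ a hl)).
set y := 1 - expR (- l).
have hy1 : y <= 1 by have := expR_gt0 (- l); rewrite /y; lra.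
have hy0 : 0 <= y.
  have h : expR (- l) <= 1 by rewrite expR_le1 oppr_le0.
  rewrite /y; lra.
have hyl : l - l ^+ 2 <= y by have := expRN_quad _ hl; rewrite /y; lra.
apply: (@le_trans _ _ (expR (l * a) * \prod_i expR (- (rho i s * y)))).
  apply: ler_wpM2l; first exact: expR_ge0.
  apply: ler_prod => i _; apply/andP; split.
    have := rho_le1 i s; have := rho_ge0 i s; nra.
  have := expR_ge1Dx (- (rho i s * y)); lra.
rewrite -expR_sum -expRD ler_expR.
have hs : 0 <= \sum_i rho i s by apply: sumr_ge0.
have -> : \sum_i - (rho i s * y) = - (y * \sum_i rho i s).
  by rewrite sumrN mulr_sumr; congr (- _); apply: eq_bigr => i _; rewrite mulrC.
nra.
Qed.

Lemma chernoff (a D : R) : (0 < n)%N -> 0 <= D -> a + D <= \sum_i rho i s ->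
  \sum_(b | (cnt b)%:R <= a) \prod_i rho i (b i) <= expR (- (D ^+ 2 / (4 * n%:R))).
Proof.
move=> n0 hD haD.
have m0 : 0 < (n%:R : R) by rewrite ltr0n.
set m := (n%:R : R) in m0 *.
have hRs : \sum_i rho i s <= m.
  apply: (@le_trans _ _ (\sum_(i < n) (1 : R))); first by apply: ler_sum => i _; apply: rho_le1.
  by rewrite sumr_const card_ord /m.
have hs : 0 <= \sum_i rho i s by apply: sumr_ge0.
set Rs := \sum_i rho i s in hRs hs haD *.
set l := D / (2 * m).
have hl : 0 <= l by apply: divr_ge0 => //; lra.
apply: (le_trans (chern2 _ a hl)); rewrite ler_expR.
have e1 : l * a - l * Rs <= - (l * D) by nra.
have e2 : l ^+ 2 * Rs <= l ^+ 2 * m by apply: ler_wpM2l => //; apply: sqr_ge0.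
have e3 : - (l * D) + l ^+ 2 * m = - (D ^+ 2 / (4 * m)) by rewrite /l; field; lra.
rewrite -/Rs. lra.
Qed.

End Chern.
End Real.
Section Prob.
Variables (R : realType) (d : measure_display) (T : measurableType d).
Variables (P : probability T R) (B : nat -> T -> bool).
Hypothesis hB : bool_rvs B.
Hypothesis hI : mutually_independent P B.

Definition vec n (w : T) : {ffun 'I_n -> bool} := [ffun i : 'I_n => B i w].

Lemma cyl_eq n (b : {ffun 'I_n -> bool}) :
  [set w | vec n w = b] = \bigcap_(i in [set: 'I_n]) [set w | B i w = b i].
Proof.
apply/seteqP; split => w /=.
  by move=> <- i _; rewrite ffunE.
by move=> h; apply/ffunP => i; rewrite ffunE; apply: h.
Qed.

Lemma cyl_measurable n (b : {ffun 'I_n -> bool}) : measurable [set w | vec n w = b].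
Proof.
rewrite cyl_eq; apply: fin_bigcap_measurable; first exact: finite_finset.
by move=> i _; apply: hB.
Qed.

Lemma cyl_prob n (b : {ffun 'I_n -> bool}) :
  P [set w | vec n w = b] = (\prod_(i < n) fine (P [set w | B i w = b i]))%:E.
Proof.
pose bb (k : nat) := if insub k is Some i then b i else false.
have hbb : forall i : 'I_n, bb i = b i.
  by move=> i; rewrite /bb; case: insubP => [j _ /val_inj ->|]; rewrite ?ltn_ord.
have -> : [set w | vec n w = b] = [set w | forall i, i \in iota 0 n -> B i w = bb i].
  apply/seteqP; split => w /=.
    move=> hw k; rewrite mem_iota leq0n add0n /= => hk.
    rewrite /bb; case: insubP => [j _ <-|]; last by rewrite hk.
    by rewrite -hw ffunE.
  move=> h; apply/ffunP => i; rewrite ffunE -hbb; apply: h.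
  by rewrite mem_iota leq0n add0n ltn_ord.
rewrite hI ?iota_uniq //; congr EFin.
transitivity (\prod_(i < n) fine (P [set w | B i w = bb i])); last first.
  by apply: eq_bigr => i _; rewrite hbb.
have := @big_mkord _ 1 *%R n xpredT (fun i => fine (P [set w | B i w = bb i])).
by rewrite /index_iota subn0 => <-.
Qed.

Lemma event_eq n (Q : pred {ffun 'I_n -> bool}) :
  [set w | Q (vec n w)] = \bigcup_(b in [set` Q]) [set w | vec n w = b].
Proof.
apply/seteqP; split => w /=.
  by move=> h; exists (vec n w).
by move=> [b /= hb ->].
Qed.

Lemma event_measurable n (Q : pred {ffun 'I_n -> bool}) :
  measurable [set w | Q (vec n w)].
Proof.
rewrite event_eq; apply: fin_bigcup_measurable; first exact: finite_finset.
by move=> b _; apply: cyl_measurable.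
Qed.

Lemma event_prob n (Q : pred {ffun 'I_n -> bool}) :
  P [set w | Q (vec n w)] =
  (\sum_(b | Q b) \prod_(i < n) fine (P [set w | B i w = b i]))%:E.
Proof.
rewrite event_eq measure_fin_bigcup.
- rewrite -(bigfs _ (index_enum_uniq _)); last by move=> i _; rewrite mem_index_enum.
  rewrite -sumEFin; apply: eq_bigr => b _; exact: cyl_prob.
- exact: finite_finset.
- by move=> i j _ _ [w [/= <- <-]].
- by move=> b _; apply: cyl_measurable.
Qed.


End Prob.

Arguments vec {d T} B n w.
Section NF.
Variables (R : realType) (d : measure_display) (T : measurableType d).
Variables (P : probability T R) (B : nat -> T -> bool).
Hypothesis hB : bool_rvs B.

Lemma nfail0 w : nfail B 0 w = 0%N.
Proof. by rewrite /nfail big_ord0. Qed.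

Lemma nfailS k w : nfail B k.+1 w = (nfail B k w + ~~ B k w)%N.
Proof. by rewrite /nfail big_ord_recr. Qed.

Lemma nfail_le k w : (nfail B k w <= k)%N.
Proof. elim: k => [|k IH]; first by rewrite nfail0. rewrite nfailS; case: (B k w) => /=; lia. Qed.

Lemma nfail_mono w k k' : (k <= k')%N -> (nfail B k w <= nfail B k' w)%N.
Proof.
move=> /subnK <-; elim: (k' - k)%N => [|j IH]; first by rewrite add0n.
rewrite addSn nfailS; lia.
Qed.

Lemma nfail_ivt (x : nat) w k : (x <= nfail B k w)%N -> exists2 j, (j <= k)%N & nfail B j w = x.
Proof.
elim: k => [|k IH].
  by rewrite nfail0 => h; exists 0%N => //; rewrite nfail0; lia.
move=> h; case: (leqP x (nfail B k w)) => h2.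
  by have [j hj hj2] := IH h2; exists j => //; lia.
exists k.+1 => //; move: h; rewrite nfailS; case: (B k w) => /=; lia.
Qed.

Lemma U_cases (x : nat) w : (0 < x)%N ->
  (Ucookie (R:=R) B x w = +oo%E /\ forall k, (nfail B k w < x)%N) \/
  exists u : nat, Ucookie (R:=R) B x w = (u%:R)%:E /\
     forall k, (nfail B k w < x)%N = (k < u + x)%N.
Proof.
move=> hx; rewrite /Ucookie; case: pselect => [h|h].
- right; case: ex_minnP => m /eqP Hm Hmin.
  have hxm : (x <= m)%N by rewrite -{1}Hm nfail_le.
  exists (m - x)%N; split; first by [].
  rewrite subnK // => k; apply/idP/idP.
  + move=> hk; rewrite ltnNge; apply/negP => hmk.
    by have := nfail_mono w m k hmk; rewrite Hm; lia.
  + move=> hk; rewrite ltnNge; apply/negP => hk2.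
    have [j hj hj2] := nfail_ivt _ _ _ hk2.
    by have := Hmin j (introT eqP hj2); lia.
- left; split => // k; rewrite ltnNge; apply/negP => hk.
  have [j _ hj] := nfail_ivt _ _ _ hk; apply: h; exists j; exact/eqP.
Qed.

Lemma nfail_vec k w : nfail B k w = (\sum_(i < k) (~~ vec B k w i : nat))%N.
Proof. by apply: eq_bigr => i _; rewrite ffunE. Qed.

Lemma nfail_measurable k (Q : pred nat) : measurable [set w | Q (nfail B k w)].
Proof.
have -> : [set w | Q (nfail B k w)] =
    [set w | (fun b : {ffun 'I_k -> bool} => Q (\sum_(i < k) (~~ b i : nat))%N) (vec B k w)].
  by apply/seteqP; split => w /=; rewrite nfail_vec.
exact (@event_measurable _ _ _ hB _ (fun b : {ffun 'I_k -> bool} => Q (\sum_(i < k) (~~ b i : nat))%N)).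
Qed.

End NF.

Lemma exp_arith (R : realType) (X eps q C M n : R) : 0 < X -> 0 < eps -> 0 < q -> 1 <= C ->
  0 < n -> n <= X * M -> 0 < M ->
  q ^+ 2 / (16 * C) * eps ^+ 2 / M * X <= (X * eps * q / 2) ^+ 2 / (4 * n).
Proof.
move=> X0 e0 q0 C1 n0 nXM M0.
rewrite ler_pdivlMr; last by lra.
set L := q ^+ 2 / (16 * C) * eps ^+ 2 / M * X.
have L0 : 0 <= L.
  rewrite /L; apply: mulr_ge0; last by lra.
  apply: divr_ge0; last by lra.
  apply: mulr_ge0; last by apply: sqr_ge0.
  apply: divr_ge0; [exact: sqr_ge0 | lra].
have h1 : L * (4 * n) <= L * (4 * (X * M)) by apply: ler_wpM2l => //; lra.
have h2 : L * (4 * (X * M)) = (X * eps * q) ^+ 2 / (4 * C).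
  by rewrite /L; field; apply/andP; split; apply/eqP => hh; lra.
have h3 : (X * eps * q) ^+ 2 / (4 * C) <= (X * eps * q / 2) ^+ 2.
  rewrite ler_pdivrMr; last by lra.
  have e : (X * eps * q / 2) ^+ 2 * (4 * C) = (X * eps * q) ^+ 2 * C by field.
  rewrite e; have := sqr_ge0 (X * eps * q); nra.
lra.
Qed.


Lemma div_lt1 (R : realType) (X u mu eps : R) : 0 < X -> eps < u * X^-1 - mu -> X * (mu + eps) < u.
Proof. move=> X0 h; have : mu + eps < u / X by lra. rewrite ltr_pdivlMr // => h2; lra. Qed.
Lemma div_lt2 (R : realType) (X u mu eps : R) : 0 < X -> eps < - (u * X^-1 - mu) -> u < X * (mu - eps).
Proof. move=> X0 h; have : u / X < mu - eps by lra. rewrite ltr_pdivrMr // => h2; lra. Qed.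
Lemma div_gt1 (R : realType) (X u mu eps : R) : 0 < X -> X * (mu + eps) < u -> eps < u * X^-1 - mu.
Proof. move=> X0 h; have : mu + eps < u / X by rewrite ltr_pdivlMr //; lra. lra. Qed.
Lemma div_gt2 (R : realType) (X u mu eps : R) : 0 < X -> u < X * (mu - eps) -> eps < - (u * X^-1 - mu).
Proof. move=> X0 h; have : u / X < mu - eps by rewrite ltr_pdivrMr //; lra. lra. Qed.

Lemma small_arith (R : realType) (X eps q C M : R) : 0 < X -> 0 < eps -> 0 < q -> q <= 1 -> 1 <= C ->
  eps <= M -> 0 < M -> X * eps * q < 2 * C ->
  1 <= 2 * expR (- (q ^+ 2 / (16 * C) * eps ^+ 2 / M * X)).
Proof.
move=> X0 e0 q0 q1 C1 eM M0 hs.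
have [Y YE] : exists Y, Y = q ^+ 2 / (16 * C) * eps ^+ 2 / M * X by eexists.
rewrite -YE.
have e1 : Y * (16 * C * M) = q ^+ 2 * eps ^+ 2 * X.
  by rewrite YE; field; apply/andP; split; apply/eqP => hh; lra.
have e2 : q ^+ 2 * eps ^+ 2 * X = (q * eps) * (X * eps * q) by ring.
have qe0 : 0 <= q * eps by apply: mulr_ge0; lra.
have e3 : (q * eps) * (X * eps * q) <= (q * eps) * (2 * C) by apply: ler_wpM2l => //; lra.
have e5 : q * eps <= eps by have := ler_wpM2r (ltW e0) q1; rewrite mul1r.
have e4 : (q * eps) * (2 * C) <= M * (2 * C) by apply: ler_wpM2r; lra.
have hY : Y <= 1 / 8.
  rewrite -(@ler_pM2r _ (16 * C * M)); last by apply: mulr_gt0; lra.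
  rewrite e1 e2; lra.
have := expR_ge1Dx (- Y); lra.
Qed.

Section Main.
Variables (R : realType) (p : nat -> R) (pbar K : R).
Hypothesis hp01 : forall i, 0 <= p i <= 1.
Hypothesis hpb : 0 < pbar < 1.
Hypothesis hK : forall n : nat, (0 < n)%N -> `|pavg p n - pbar| <= K / n%:R.
Variables (d : measure_display) (T : measurableType d).
Variables (P : probability T R) (B : nat -> T -> bool).
Hypotheses (hB : bool_rvs B) (hI : mutually_independent P B).
Hypothesis hp : forall i, P [set w | B i w = true] = (p i)%:E.

Lemma Pfalse i : P [set w | B i w = false] = (1 - p i)%:E.
Proof.
have -> : [set w | B i w = false] = ~` [set w | B i w = true].
  by apply/seteqP; split => w /=; case: (B i w).
by rewrite probability_setC ?hp //; apply: hB.
Qed.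

Lemma rho_true i : fine (P [set w | B i w = true]) = p i.
Proof. by rewrite hp. Qed.
Lemma rho_false i : fine (P [set w | B i w = false]) = 1 - p i.
Proof. by rewrite Pfalse. Qed.

Lemma chern_prob n s (a D : R) : (0 < n)%N -> 0 <= D ->
  a + D <= \sum_(i < n) fine (P [set w | B i w = s]) ->
  (P [set w | ((cnt n s (vec B n w))%:R <= a)%R] <= (expR (- (D ^+ 2 / (4 * n%:R))))%:E)%E.
Proof.
move=> n0 hD haD.
rewrite (@event_prob _ _ _ _ _ hB hI n (fun b => (cnt n s b)%:R <= a)) lee_fin.
apply: (@chernoff _ n (fun (i : 'I_n) v => fine (P [set w | B i w = v])) s) => //.
- move=> i v; have := hp01 i; case/andP => h1 h2.
  by case: v; rewrite ?rho_true ?rho_false //; lra.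
- by move=> i; rewrite rho_true rho_false; ring.
Qed.

Lemma sum_p n : (0 < n)%N -> n%:R * pbar - K <= \sum_(i < n) p i <= n%:R * pbar + K.
Proof.
move=> n0; have n0' : 0 < (n%:R : R) by rewrite ltr0n.
have e : \sum_(i < n) p i = n%:R * pavg p n by rewrite /pavg mulrC divfK // gt_eqF.
have := hK _ n0; rewrite ler_norml => /andP [h1 h2].
have e1 : n%:R * (K / n%:R) = K by field; rewrite gt_eqF.
rewrite e; apply/andP; split.
- have : n%:R * (- (K / n%:R)) <= n%:R * (pavg p n - pbar) by apply: ler_wpM2l => //; lra.
  by rewrite mulrN e1 mulrBr => h; lra.
- have : n%:R * (pavg p n - pbar) <= n%:R * (K / n%:R) by apply: ler_wpM2l => //; lra.
  by rewrite e1 mulrBr => h; lra.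
Qed.



Lemma cnt_false n w : cnt n false (vec B n w) = nfail B n w.
Proof. by rewrite /cnt nfail_vec; apply: eq_bigr => i _; case: (vec B n w i). Qed.

Lemma cnt_true n w : (cnt n true (vec B n w) + nfail B n w)%N = n.
Proof.
rewrite /cnt nfail_vec -big_split /=.
transitivity (\sum_(i < n) 1)%N; first by apply: eq_bigr => i _; case: (vec B n w i).
by rewrite sum_nat_const card_ord muln1.
Qed.

Lemma upper (x : nat) (eps : R) : (0 < x)%N -> 0 < eps -> 2 * (1 + `|K|) <= x%:R * eps * (1 - pbar) ->
  (P [set w | (nfail B (Num.truncn (x%:R * (pbar / (1 - pbar) + eps)) + x) w < x)%N] <=
   (expR (- ((1 - pbar) ^+ 2 / (16 * (1 + `|K|)) * eps ^+ 2 / (1 + pbar / (1 - pbar) + eps) * x%:R)))%:E)%E.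
Proof.
move=> hx heps hbig.
have [mu muE] : exists mu : R, mu = pbar / (1 - pbar) by eexists.
have [q qE] : exists q : R, q = 1 - pbar by eexists.
have [C CE] : exists C : R, C = 1 + `|K| by eexists.
have [X XE] : exists X : R, X = x%:R by eexists.
rewrite -muE -qE -CE -XE in hbig *.
have hq0 : 0 < q by rewrite qE; case/andP: hpb => ? ?; lra.
have hq1 : q <= 1 by rewrite qE; case/andP: hpb => ? ?; lra.
have hmuq : mu * q = pbar.
  by rewrite muE qE; field; apply/eqP => hh; case/andP: hpb => ? ?; lra.
have hmu0 : 0 <= mu by rewrite muE; case/andP: hpb => ? ?; apply: divr_ge0; lra.
have hKC : K <= C - 1 by rewrite CE; have := ler_norm K; lra.
have hC1 : 1 <= C by rewrite CE; have := normr_ge0 K; lra.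
have hX0 : 0 < X by rewrite XE ltr0n.
have hXnat : forall k : nat, (X <= k%:R) = (x <= k)%N by move=> k; rewrite XE ler_nat.
have hXnat2 : forall k : nat, (k%:R <= X) = (k <= x)%N by move=> k; rewrite XE ler_nat.
have hnat : forall m : nat, (((m + x)%N)%:R : R) = m%:R + X by move=> m; rewrite natrD XE.
clear muE XE.
have [t1 t1E] : exists t1, t1 = X * (mu + eps) by eexists.
rewrite -t1E.
have t10 : 0 <= t1 by rewrite t1E; apply: mulr_ge0; lra.
have [n1 n1E] : exists n1, n1 = (Num.truncn t1 + x)%N by eexists.
rewrite -n1E.
have htr1 : (Num.truncn t1)%:R <= t1 by rewrite -truncn_ge_nat.
have htr2 : t1 < (Num.truncn t1)%:R + 1 by rewrite natr1 -truncn_le_nat.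
have hn1 : (n1%:R : R) = (Num.truncn t1)%:R + X by rewrite n1E hnat.
have n10 : (0 < n1)%N by rewrite n1E addn_gt0 hx orbT.
have [D DE] : exists D, D = X * eps * q / 2 by eexists.
apply: (@le_trans _ _ (P [set w | ((cnt n1 false (vec B n1 w))%:R <= X)%R])).
  apply: le_measure; rewrite ?inE.
  - exact (@nfail_measurable _ _ _ hB _ (fun n => (n < x)%N)).
  - exact: (@event_measurable _ _ _ hB _ (fun b => ((cnt n1 false b)%:R <= X)%R)).
  - move=> w h; have h' : (nfail B n1 w < x)%N := h.
    suff : ((cnt n1 false (vec B n1 w))%:R <= X)%R by [].
    rewrite cnt_false hXnat2; lia.
have hc := @chern_prob n1 false X D.
apply: (le_trans (hc n10 _ _)) => //.
- by rewrite DE; apply: divr_ge0 => //; apply: mulr_ge0; [apply: mulr_ge0|]; lra.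
- under eq_bigr do rewrite rho_false.
  rewrite sumrB sumr_const card_ord.
  have := sum_p _ n10; case/andP => _ hs.
  have key : (t1 + X - 1) * q = X + X * eps * q - q.
    have h1 : X * mu * q = X * pbar by rewrite -mulrA hmuq.
    have h2 : X * q = X - X * pbar by rewrite qE; ring.
    rewrite t1E; lra.
  have hq : (t1 + X - 1) * q <= n1%:R * q by apply: ler_wpM2r; lra.
  have e : (1 *+ n1 : R) = n1%:R by [].
  have h3 : n1%:R * q = n1%:R - n1%:R * pbar by rewrite qE; ring.
  rewrite e DE; lra.
- rewrite lee_fin ler_expR lerN2 DE.
  apply: exp_arith; try lra.
  all: try by rewrite ltr0n.
  all: try (rewrite hn1 t1E; nra).
Qed.

Lemma lower (x : nat) (eps : R) : (0 < x)%N -> 0 < eps -> 2 * (1 + `|K|) <= x%:R * eps * (1 - pbar) -> 0 <= pbar / (1 - pbar) - eps ->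
  (P [set w | (x <= nfail B (Num.truncn (x%:R * (pbar / (1 - pbar) - eps)) + x) w)%N] <=
   (expR (- ((1 - pbar) ^+ 2 / (16 * (1 + `|K|)) * eps ^+ 2 / (1 + pbar / (1 - pbar) + eps) * x%:R)))%:E)%E.
Proof.
move=> hx heps hbig hme.
have [mu muE] : exists mu : R, mu = pbar / (1 - pbar) by eexists.
have [q qE] : exists q : R, q = 1 - pbar by eexists.
have [C CE] : exists C : R, C = 1 + `|K| by eexists.
have [X XE] : exists X : R, X = x%:R by eexists.
rewrite -muE -qE -CE -XE in hbig hme *.
have hq0 : 0 < q by rewrite qE; case/andP: hpb => ? ?; lra.
have hq1 : q <= 1 by rewrite qE; case/andP: hpb => ? ?; lra.
have hmuq : mu * q = pbar.
  by rewrite muE qE; field; apply/eqP => hh; case/andP: hpb => ? ?; lra.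
have hmu0 : 0 <= mu by rewrite muE; case/andP: hpb => ? ?; apply: divr_ge0; lra.
have hKC : K <= C - 1 by rewrite CE; have := ler_norm K; lra.
have hC1 : 1 <= C by rewrite CE; have := normr_ge0 K; lra.
have hX0 : 0 < X by rewrite XE ltr0n.
have hXnat : forall k : nat, (X <= k%:R) = (x <= k)%N by move=> k; rewrite XE ler_nat.
have hXnat2 : forall k : nat, (k%:R <= X) = (k <= x)%N by move=> k; rewrite XE ler_nat.
have hnat : forall m : nat, (((m + x)%N)%:R : R) = m%:R + X by move=> m; rewrite natrD XE.
clear muE XE.
have [t2 t2E] : exists t2, t2 = X * (mu - eps) by eexists.
rewrite -t2E.
have t20 : 0 <= t2 by rewrite t2E; apply: mulr_ge0; lra.
have [n2 n2E] : exists n2, n2 = (Num.truncn t2 + x)%N by eexists.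
rewrite -n2E.
have htr1 : (Num.truncn t2)%:R <= t2 by rewrite -truncn_ge_nat.
have hn2 : (n2%:R : R) = (Num.truncn t2)%:R + X by rewrite n2E hnat.
have n20 : (0 < n2)%N by rewrite n2E addn_gt0 hx orbT.
have [D DE] : exists D, D = X * eps * q / 2 by eexists.
apply: (@le_trans _ _ (P [set w | ((cnt n2 true (vec B n2 w))%:R <= n2%:R - X)%R])).
  apply: le_measure; rewrite ?inE.
  - exact (@nfail_measurable _ _ _ hB _ (fun n => (x <= n)%N)).
  - exact: (@event_measurable _ _ _ hB _ (fun b => ((cnt n2 true b)%:R <= n2%:R - X)%R)).
  - move=> w /= h; have := cnt_true n2 w.
    move=> /(congr1 (fun k => (k%:R : R))); rewrite natrD => e.
    have : X <= (nfail B n2 w)%:R by rewrite hXnat.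
    lra.
apply: (le_trans (chern_prob n2 true (n2%:R - X) D n20 _ _)) => //.
- by rewrite DE; apply: divr_ge0 => //; apply: mulr_ge0; [apply: mulr_ge0|]; lra.
- under eq_bigr do rewrite rho_true.
  have := sum_p _ n20; case/andP => hs _.
  have key : (t2 + X) * q = X - X * eps * q.
    have h1 : X * mu * q = X * pbar by rewrite -mulrA hmuq.
    have h2 : X * q = X - X * pbar by rewrite qE; ring.
    rewrite t2E; lra.
  have hq : n2%:R * q <= (t2 + X) * q by apply: ler_wpM2r; lra.
  have h3 : n2%:R * q = n2%:R - n2%:R * pbar by rewrite qE; ring.
  rewrite DE; lra.
- rewrite lee_fin ler_expR lerN2 DE.
  apply: exp_arith; try lra.
  all: try by rewrite ltr0n.
  all: try (rewrite hn2 t2E; nra).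
have hXe : 0 <= X * eps by apply: mulr_ge0; lra.
rewrite hn2; lra.
Qed.


Lemma E_eq (x : nat) (eps mu : R) : (0 < x)%N -> 0 <= x%:R * (mu + eps) ->
  [set w | (`| Ucookie B x w * (x%:R^-1)%:E - mu%:E | > eps%:E)%E] =
  [set w | (nfail B (Num.truncn (x%:R * (mu + eps)) + x) w < x)%N] `|`
  \bigcup_(m in [set m : nat | m%:R < x%:R * (mu - eps)]) [set w | (x <= nfail B (m + x) w)%N].
Proof.
move=> hx ht1.
have X0 : 0 < (x%:R : R) by rewrite ltr0n.
apply/seteqP; split => w /=; have := @U_cases R _ _ B x w hx; case => [[-> hall]|[u [-> hu]]].
- by move=> _; left; apply: hall.
- rewrite -?EFinM -?EFinB ?abse_EFin lte_fin ltr_normr => /orP[h|h].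
  + left => /=; rewrite hu ltn_add2r ltnNge truncn_ge_nat // -ltNge.
    exact: div_lt1 X0 h.
  + right; exists u; first exact: div_lt2 X0 h.
    by rewrite /= leqNgt hu ltnn.
- move=> _; rewrite gt0_mulye ?lte_fin ?invr_gt0 // addye //=; exact: ltey.
- case => [h|[m /= hm h]].
  + move: h; rewrite /= hu ltn_add2r ltnNge truncn_ge_nat // -ltNge => h.
    rewrite -?EFinM -?EFinB ?abse_EFin lte_fin ltr_normr; apply/orP; left.
    exact: div_gt1 X0 h.
  + move: h; rewrite leqNgt hu ltn_add2r -leqNgt => hum.
    have : (u%:R : R) <= m%:R by rewrite ler_nat.
    move=> hum'.
    rewrite -?EFinM -?EFinB ?abse_EFin lte_fin ltr_normr; apply/orP; right.
    apply: div_gt2 X0 _; lra.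
Qed.

Lemma final_bound (x : nat) (eps : R) : (0 < x)%N -> 0 < eps ->
  (P [set w | (`| Ucookie B x w * (x%:R^-1)%:E - (pbar / (1 - pbar))%:E | > eps%:E)%E] <=
   (2 * expR (- ((1 - pbar) ^+ 2 / (16 * (1 + `|K|)) * eps ^+ 2 / (1 + pbar / (1 - pbar) + eps)) * x%:R))%:E)%E.
Proof.
move=> hx heps.
have hup := upper _ _ hx heps.
have hlo := lower _ _ hx heps.
have [mu muE] : exists mu : R, mu = pbar / (1 - pbar) by eexists.
rewrite -muE in hup hlo *.
have hmu0 : 0 <= mu by rewrite muE; case/andP: hpb => ? ?; apply: divr_ge0; lra.
have X0 : 0 < (x%:R : R) by rewrite ltr0n.
have ht1 : 0 <= x%:R * (mu + eps) by apply: mulr_ge0; lra.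
have Emeas : measurable [set w | (`| Ucookie B x w * (x%:R^-1)%:E - mu%:E | > eps%:E)%E].
  rewrite (E_eq _ _ _ hx ht1); apply: measurableU.
    exact (@nfail_measurable _ _ _ hB _ (fun n => (n < x)%N)).
  apply: bigcup_measurable => m _.
  exact (@nfail_measurable _ _ _ hB _ (fun n => (x <= n)%N)).
rewrite mulNr.
have hq0 : 0 < 1 - pbar by case/andP: hpb => ? ?; lra.
case: (ltP (x%:R * eps * (1 - pbar)) (2 * (1 + `|K|))) => hsmall.
- apply: le_trans (probability_le1 _ Emeas) _; rewrite lee_fin.
  apply: small_arith => //.
  + by case/andP: hpb => ? ?; lra.
  + by have := normr_ge0 K; lra.
  + lra.
  + lra.
- rewrite (E_eq _ _ _ hx ht1).
  apply: le_trans (measureU2 _ _ _) _.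
  + exact (@nfail_measurable _ _ _ hB _ (fun n => (n < x)%N)).
  + apply: bigcup_measurable => m _.
    exact (@nfail_measurable _ _ _ hB _ (fun n => (x <= n)%N)).
  have h1 := hup hsmall.
  set e := expR _ in h1 *.
  have h2 : (P (\bigcup_(m in [set m : nat | (m%:R < x%:R * (mu - eps))%R])
      [set w | (x <= nfail B (m + x) w)%N]) <= e%:E)%E.
    case: (lerP 0 (mu - eps)) => hme.
    + apply: le_trans (hlo hsmall hme).
      apply: le_measure; rewrite ?inE.
      * apply: bigcup_measurable => m _.
        exact (@nfail_measurable _ _ _ hB _ (fun n => (x <= n)%N)).
      * exact (@nfail_measurable _ _ _ hB _ (fun n => (x <= n)%N)).
      * move=> w [m /= hm hw].
        have ht2 : 0 <= x%:R * (mu - eps) by apply: mulr_ge0; lra.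
        have : (m <= Num.truncn (x%:R * (mu - eps)))%N by rewrite truncn_ge_nat // ltW.
        move=> hmt.
        have hw' : (x <= nfail B (m + x) w)%N := hw.
        have hmono := @nfail_mono _ _ B w _ _ (leq_add hmt (leqnn x)).
        suff : (x <= nfail B (Num.truncn (x%:R * (mu - eps)) + x) w)%N by [].
        exact: leq_trans hw' hmono.
    + have -> : \bigcup_(m in [set m : nat | m%:R < x%:R * (mu - eps)])
          [set w | (x <= nfail B (m + x) w)%N] = set0.
        apply/seteqP; split => // w [m /= hm _].
        have : x%:R * (mu - eps) < 0 by rewrite pmulr_rlt0.
        have : (0 : R) <= m%:R by [].
        lra.
      by rewrite measure0 lee_fin /e expR_ge0.
  apply: le_trans (leeD h1 h2) _.
  by rewrite -EFinD lee_fin; lra.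
Qed.

End Main.

Theorem proposition2p1 (R : realType) (p : nat -> R) (pbar K : R) :
  (forall i, 0 <= p i <= 1) ->
  pavg p @ \oo --> pbar ->
  0 < pbar < 1 ->
  (forall n : nat, (0 < n)%N -> `|pavg p n - pbar| <= K / n%:R) ->
  let mu := pbar / (1 - pbar) in
  exists c : R, 0 < c /\
    forall (d : measure_display) (T : measurableType d)
           (P : probability T R) (B : nat -> T -> bool),
      bool_rvs B ->
      mutually_independent P B ->
      (forall i, P [set w | B i w = true] = (p i)%:E) ->
      forall (x : nat) (eps : R), (0 < x)%N -> 0 < eps ->
        (P [set w | (`| Ucookie B x w * (x%:R^-1)%:E - mu%:E | > eps%:E)%E]
        <= (2 * expR (- (c * eps ^+ 2 / (1 + mu + eps)) * x%:R))%:E)%E.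
Proof.
move=> hp01 _ hpb hK mu.
exists ((1 - pbar) ^+ 2 / (16 * (1 + `|K|))); split.
  apply: divr_gt0; last by have := normr_ge0 K; lra.
  by apply: exprn_gt0; case/andP: hpb => ? ?; lra.
move=> d T P B hB hI hp x eps hx heps.
by apply: final_bound.
Qed.
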